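(* Let $\{b_1,\dots,b_n\}$ and $\{a_1,\dots,a_n\}$ be two bases of an $n$-dimensional vector space $V$ and let $i\in\{1,\dots,n-1\}$. Then there exists a bijection $\phi$ from the set of $i$-element subsets of $\{1,\dots,n\}$ to the set of $(n-i)$-element subsets of $\{1,\dots,n\}$ such that for every $i$-element subset $I$, the set $\{b_k:k\in I\}\cup\{a_j:j\in\phi(I)\}$ is a basis of $V$. *)

(* Defs.v *)
From mathcomp Require Import all_boot all_algebra.
Set Implicit Arguments.
Unset Strict Implicit.
Unset Printing Implicit Defensive.

(* Main.v *)
Require Import Defs.
From mathcomp Require Import all_boot all_algebra.
From mathcomp Require Import fingroup perm.
Set Implicit Arguments.
Unset Strict Implicit.
Unset Printing Implicit Defensive.
Import GRing.Theory.
Local Open Scope ring_scope.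
Section CauchyBinet.
Variable R : comNzRingType.
Variables p n : nat.
Variable d : 'I_n.

Definition eL (L : {set 'I_n}) (r : 'I_p) : 'I_n := nth d (enum L) r.

Lemma eL_mem (L : {set 'I_n}) (r : 'I_p) : #|L| = p -> eL L r \in L.
Proof. by move=> hL; rewrite /eL -mem_enum mem_nth // -cardE hL. Qed.

Lemma eL_inj (L : {set 'I_n}) : #|L| = p -> injective (eL L).
Proof.
move=> hL r1 r2 /eqP; rewrite /eL nth_uniq ?enum_uniq ?ltn_ord -?cardE ?hL //.
by move/eqP/val_inj.
Qed.

Lemma idx_lt (L : {set 'I_n}) (x : 'I_n) : #|L| = p -> x \in L -> (index x (enum L) < p)%N.
Proof. by move=> hL xL; rewrite -hL cardE index_mem mem_enum. Qed.

Lemma eL_surj (L : {set 'I_n}) (x : 'I_n) (hL : #|L| = p) (xL : x \in L) :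
  eL L (Ordinal (idx_lt hL xL)) = x.
Proof. by rewrite /eL /= nth_index ?mem_enum. Qed.

Lemma CB1 (A : 'M[R]_(p,n)) (B : 'M[R]_(n,p)) :
 \det (A *m B) = \sum_(f : {ffun 'I_p -> 'I_n})
    (\prod_r A r (f r)) * \det (\matrix_(r, c) B (f r) c).
Proof.
transitivity (\sum_(s : 'S_p) (-1)^+s * \sum_(f : {ffun 'I_p -> 'I_n})
   \prod_i (A i (f i) * B (f i) (s i))).
  apply: eq_bigr => s _; congr (_ * _); rewrite -(bigA_distr_bigA (fun i j => A i j * B j (s i))).
  by apply: eq_bigr => i _; rewrite mxE.
under eq_bigr do rewrite big_distrr.
rewrite exchange_big; apply: eq_bigr => f _ /=.
rewrite /determinant big_distrr; apply: eq_bigr => s _ /=.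
rewrite big_split /= mulrCA; congr (_ * (_ * _)).
by apply: eq_bigr => i _; rewrite mxE.
Qed.

Lemma CB2 (B : 'M[R]_(n,p)) (f : {ffun 'I_p -> 'I_n}) :
  ~~ injectiveb f -> \det (\matrix_(r, c) B (f r) c) = 0.
Proof.
case/injectivePn => i1 [i2 Di12 Ef12].
by rewrite (determinant_alternate Di12) // => j; rewrite !mxE Ef12.
Qed.

Lemma img_card (f : {ffun 'I_p -> 'I_n}) : injectiveb f -> #|f @: setT| == p.
Proof. by move/injectiveP => fi; rewrite card_imset // cardsT card_ord. Qed.

Lemma CB (A : 'M[R]_(p,n)) (B : 'M[R]_(n,p)) :
 \det (A *m B) = \sum_(L : {set 'I_n} | #|L| == p)
   \det (\matrix_(r, c) A r (eL L c)) * \det (\matrix_(r, c) B (eL L r) c).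
Proof.
rewrite CB1 (bigID (fun f : {ffun 'I_p -> 'I_n} => injectiveb f)) /=.
rewrite [X in _ + X]big1 ?addr0; last by move=> f /CB2 ->; rewrite mulr0.
rewrite (partition_big (fun f : {ffun 'I_p -> 'I_n} => f @: setT)
          (fun L : {set 'I_n} => #|L| == p)) /=; last exact: img_card.
apply: eq_bigr => L /eqP hL.
pose h := fun t : 'S_p => [ffun r => eL L (t r)].
pose h' := fun f : {ffun 'I_p -> 'I_n} => odflt 1%g [pick t | h t == f].
have hinj : injective h.
  move=> t1 t2 /ffunP e; apply/permP => r; apply: (eL_inj hL).
  by have := e r; rewrite !ffunE.
rewrite (reindex_onto h h') /=; last first.
  move=> f /andP [fi /eqP fim].
  have fL r : f r \in L by rewrite -fim imset_f.
  pose g := fun r => Ordinal (idx_lt hL (fL r)).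
  have gi : injective g.
    move=> r1 r2 e; apply: (injectiveP _ fi).
    by rewrite -(eL_surj hL (fL r1)) -(eL_surj hL (fL r2)); congr eL.
  have hg : h (perm gi) = f.
    by apply/ffunP => r; rewrite ffunE permE eL_surj.
  rewrite /h'; case: pickP => [t /eqP //|/(_ (perm gi))].
  by rewrite hg eqxx.
have himg t : h t @: setT = L.
  apply/eqP; rewrite eqEcard hL card_imset ?cardsT ?card_ord ?leqnn ?andbT.
    by apply/subsetP => x /imsetP [r _ ->]; rewrite ffunE eL_mem.
  by move=> r1 r2; rewrite !ffunE => /(eL_inj hL)/perm_inj.
have hinjb t : injectiveb (h t).
  by apply/injectiveP => r1 r2; rewrite !ffunE => /(eL_inj hL)/perm_inj.
rewrite (eq_bigl predT) /=; last first.
  move=> t; rewrite hinjb himg eqxx /=; apply/eqP.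
  rewrite /h'; case: pickP => [t' /eqP /hinj //|/(_ t)].
  by rewrite eqxx.
have eB t : \matrix_(r, c) B (h t r) c = row_perm t (\matrix_(r, c) B (eL L r) c).
  by apply/matrixP => r c; rewrite !mxE ffunE.
under eq_bigr do rewrite eB row_permE det_mulmx det_perm.
rewrite /determinant big_distrl /=; apply: eq_bigr => t _.
rewrite mulrA; congr (_ * _); rewrite mulrC; congr (_ * _).
by apply: eq_bigr => r _; rewrite !mxE ffunE.
Qed.

End CauchyBinet.
Section Compound.
Variable F : fieldType.
Variables p n : nat.
Variable d : 'I_n.

Local Notation T := {set 'I_n}.

Definition minor (M : 'M[F]_n) (I K : T) : F :=
  \det (\matrix_(r, c) M (@eL p n d I r) (@eL p n d K c)).

Definition cf (M : 'M[F]_n) (I K : T) : F :=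
  if (#|I| == p) && (#|K| == p) then minor M I K else (I == K)%:R.

Definition cmp (M : 'M[F]_n) : 'M[F]_#|T| :=
  \matrix_(u, v) cf M (enum_val u) (enum_val v).

Lemma cf_off (M : 'M[F]_n) (I L : T) : (#|I| == p) != (#|L| == p) -> cf M I L = 0.
Proof.
rewrite /cf; have [->|ne] := eqVneq I L; first by rewrite eqxx.
rewrite -/(0:F) ; case: ifP => // /andP[/eqP a /eqP b].
by rewrite a b eqxx.
Qed.

Lemma cf_mul (M N : 'M[F]_n) (I K : T) : cf (M *m N) I K = \sum_(L : T) cf M I L * cf N L K.
Proof.
have [hI|hI] := eqVneq #|I| p; have [hK|hK] := eqVneq #|K| p.
- rewrite [cf (M *m N) I K]/cf hI hK eqxx /=.
  rewrite (bigID (fun L : T => #|L| == p)) /= [X in _ + X]big1 ?addr0; last first.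
    by move=> L hL; rewrite cf_off ?mul0r // hI eqxx; case: eqP hL.
  transitivity (\det ((\matrix_(r, j) M (@eL p n d I r) j) *m
                      (\matrix_(j, c) N j (@eL p n d K c)))).
    by rewrite /minor; congr (\det _); apply/matrixP => r c; rewrite !mxE;
       apply: eq_bigr => j _; rewrite !mxE.
  rewrite (CB d); apply: eq_bigr => L hL; rewrite /cf hI hK hL eqxx /= /minor.
  by congr (_ * _); congr (\det _); apply/matrixP => r c; rewrite !mxE.
- rewrite cf_off; last by rewrite hI eqxx (negbTE hK).
  symmetry; rewrite big1 // => L _; have [hL|hL] := eqVneq #|L| p.
    by rewrite (@cf_off N) ?mulr0 // hL eqxx (negbTE hK).
  by rewrite (@cf_off M) ?mul0r // hI eqxx (negbTE hL).
- rewrite cf_off; last by rewrite hK eqxx (negbTE hI).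
  symmetry; rewrite big1 // => L _; have [hL|hL] := eqVneq #|L| p.
    by rewrite (@cf_off M) ?mul0r // hL eqxx (negbTE hI).
  by rewrite (@cf_off N) ?mulr0 // hK eqxx (negbTE hL).
- rewrite [cf (M *m N) I K]/cf (negbTE hI) /= (bigD1 I) //= big1 ?addr0.
    by rewrite /cf (negbTE hI) (negbTE hK) /= eqxx mul1r.
  move=> L /negbTE nL; rewrite [cf M I L]/cf (negbTE hI) /= eq_sym nL mul0r //.
Qed.

Lemma cmp_mul (M N : 'M[F]_n) : cmp (M *m N) = cmp M *m cmp N.
Proof.
apply/matrixP => u v; rewrite !mxE cf_mul.
under [RHS]eq_bigr do rewrite !mxE.
rewrite (reindex (@enum_val _ (pred_of_simpl predT))) /=; last exact: onW_bij (enum_val_bij _).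
done.
Qed.


Lemma cf_one (I K : T) : cf 1%:M I K = (I == K)%:R.
Proof.
rewrite /cf; case: ifP => // /andP[/eqP hI /eqP hK]; rewrite /minor.
have [<-|ne] := eqVneq I K.
  rewrite -[RHS](det1 F p); congr (\det _); apply/matrixP => r c.
  by rewrite !mxE (inj_eq (eL_inj hI)).
have [x xI xK] : exists2 x, x \in I & x \notin K.
  apply/subsetPn; apply: contra ne => sIK.
  by rewrite eqEcard sIK hI hK leqnn.
rewrite (expand_det_row _ (Ordinal (idx_lt hI xI))) big1 // => c _.
rewrite !mxE eL_surj; case: eqP => [e|_]; last by rewrite mul0r.
by have := eL_mem d c hK; rewrite -e (negbTE xK).
Qed.

Lemma cmp_one : cmp 1%:M = 1%:M.
Proof.
by apply/matrixP => u v; rewrite !mxE cf_one (inj_eq enum_val_inj).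
Qed.

Lemma matching (M M' : 'M[F]_n) : M *m M' = 1%:M ->
  exists sigma : T -> T, [/\ injective sigma,
    forall I : T, (#|sigma I| == p) = (#|I| == p) &
    forall I : T, #|I| = p -> minor M I (sigma I) != 0].
Proof.
move=> h.
have dn : \det (cmp M) != 0.
  have := congr1 (fun X => \det (cmp X)) h.
  rewrite /= cmp_mul cmp_one det_mulmx det1 => e.
  by apply/eqP => e0; move: e; rewrite e0 mul0r => /eqP; rewrite eq_sym oner_eq0.
have [s hs] : exists s : 'S_#|T|, forall u, cmp M u (s u) != 0.
  have : [exists s : 'S_#|T|, [forall u, cmp M u (s u) != 0]].
    apply: contraR dn => /existsPn H; apply/eqP; rewrite /determinant big1 // => s _.
    have /forallPn [u /negPn /eqP e] := H s.
    by rewrite (bigD1 u) //= e mul0r mulr0.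
  by case/existsP => s /forallP hs; exists s.
pose sg := fun I : T => enum_val (s (enum_rank I)).
have key (I : T) : cf M I (sg I) != 0.
  by have := hs (enum_rank I); rewrite mxE enum_rankK.
have h2 (I : T) : (#|sg I| == p) = (#|I| == p).
  have := key I; rewrite /cf; case: ifP => [/andP[/eqP -> /eqP ->] //|_].
  by have [<-|] := eqVneq I (sg I); rewrite /= ?eqxx.

exists sg; split => //.
- by move=> I1 I2 /enum_val_inj/perm_inj/enum_rank_inj.
- move=> I hI; have := key I; have := h2 I; rewrite hI eqxx => e.
  by rewrite /cf hI e eqxx.
Qed.

End Compound.
Lemma sum_eL (R : nmodType) p n (d : 'I_n) (K : {set 'I_n}) (G : 'I_n -> R) :
  #|K| = p -> \sum_(j in K) G j = \sum_(c < p) G (@eL p n d K c).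
Proof.
move=> hK; rewrite -big_enum (big_nth d) -cardE hK big_mkord.
by apply: eq_bigr.
Qed.

Lemma basis_minor (F : fieldType) (V : vectType F) (n p : nat) (d : 'I_n)
    (b a : n.-tuple V) (ha : basis_of fullv a) (hdim : \dim (fullv : {vspace V}) = n)
    (I K : {set 'I_n}) (hI : #|I| = p) (hK : #|K| = p) :
  @minor F p n d (\matrix_(k, j) coord a j (tnth b k)) I K != 0 ->
  basis_of fullv ([seq tnth b k | k in I] ++ [seq tnth a j | j in ~: K]).
Proof.
set M := \matrix_(k, j) _ => hm.
set X := _ ++ _.
rewrite basisEdim; apply/andP; split; last first.
  rewrite size_cat !size_map -!cardE hI; apply: (@leq_trans n); last by rewrite hdim.
  by rewrite -hK cardsC card_ord.
rewrite -(span_basis ha); apply/span_subvP => v /tnthP [j ->].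
have [jK|jK] := boolP (j \in K); last first.
  by apply: memv_span; rewrite mem_cat; apply/orP; right; apply: map_f;
     rewrite mem_enum in_setC.
pose Q := \matrix_(r, c) M (@eL p n d I r) (@eL p n d K c).
have Qu : Q \in unitmx by rewrite unitmxE unitfE.
have w r : \sum_c Q r c *: tnth a (@eL p n d K c) \in <<X>>%VS.
  have eb : tnth b (@eL p n d I r) = \sum_j M (@eL p n d I r) j *: tnth a j.
    rewrite {1}(coord_basis ha (memvf (tnth b (@eL p n d I r)))).
    by apply: eq_bigr => k _; rewrite /M mxE [tnth a k](tnth_nth 0).
  rewrite (bigID (fun j => j \in K)) /= (sum_eL d _ hK) in eb.
  have -> : \sum_c Q r c *: tnth a (@eL p n d K c) =
      tnth b (@eL p n d I r) - \sum_(j | j \notin K) M (@eL p n d I r) j *: tnth a j.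
    by rewrite eb addrK; apply: eq_bigr => c _; rewrite mxE.
  apply: memvB.
    by apply: memv_span; rewrite mem_cat map_f // mem_enum eL_mem.
  apply: memv_suml => k kK; apply: memvZ; apply: memv_span.
  by rewrite mem_cat; apply/orP; right; apply: map_f; rewrite mem_enum in_setC.
pose c0 := Ordinal (idx_lt hK jK).
have -> : tnth a j = \sum_r invmx Q c0 r *: \sum_c Q r c *: tnth a (@eL p n d K c).
  symmetry.
  transitivity (\sum_r \sum_c (invmx Q c0 r * Q r c) *: tnth a (@eL p n d K c)).
    by apply: eq_bigr => r _; rewrite scaler_sumr; apply: eq_bigr => c _; rewrite scalerA.
  rewrite exchange_big /=.
  transitivity (\sum_c ((invmx Q *m Q) c0 c) *: tnth a (@eL p n d K c)).
    by apply: eq_bigr => c _; rewrite mxE scaler_suml.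
  rewrite mulVmx // (bigD1 c0) //= big1 ?addr0.
    by rewrite mxE eqxx scale1r eL_surj.
  by move=> c nc; rewrite mxE eq_sym (negbTE nc) scale0r.
by apply: memv_suml => r _; apply: memvZ; apply: w.
Qed.

Theorem lemma2p2 (F : fieldType) (V : vectType F) (n i : nat)
    (b a : n.-tuple V)
    (hdim : \dim (fullv : {vspace V}) = n)
    (hb : basis_of fullv b) (ha : basis_of fullv a)
    (hi1 : (0 < i)%N) (hi2 : (i < n)%N) :
  exists phi : {set 'I_n} -> {set 'I_n},
    [/\ (forall I : {set 'I_n}, #|I| = i -> #|phi I| = (n - i)%N),
        {in [pred I : {set 'I_n} | #|I| == i] &, injective phi},
        (forall J : {set 'I_n}, #|J| = (n - i)%N ->
            exists2 I : {set 'I_n}, #|I| = i & phi I = J) &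
        (forall I : {set 'I_n}, #|I| = i ->
            basis_of fullv ([seq tnth b k | k in I] ++ [seq tnth a j | j in phi I]))].
Proof.
pose d : 'I_n := Ordinal (leq_ltn_trans (leq0n i) hi2).
pose M : 'M[F]_n := \matrix_(k, j) coord a j (tnth b k).
pose M' : 'M[F]_n := \matrix_(k, j) coord b j (tnth a k).
have MM' : M *m M' = 1%:M.
  apply/matrixP => k l; rewrite !mxE.
  have := coord_free k l (basis_free hb); rewrite -(tnth_nth 0) => <-.
  rewrite {1}(coord_basis ha (memvf (tnth b k))) linear_sum /=.
  apply: eq_bigr => j _; by rewrite linearZ /= !mxE [tnth a j](tnth_nth 0).
have [sg [sginj sgsz sgm]] := @matching F i n d M M' MM'.
exists (fun I => ~: sg I); split.
- move=> I hI; have := sgsz I; rewrite hI eqxx => /eqP e.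
  by apply/eqP; rewrite -(eqn_add2l #|sg I|) cardsC card_ord e subnKC // ltnW.
- by move=> I1 I2 _ _ /setC_inj /sginj.
- move=> J hJ.
  have hK : #|~: J| = i.
    by have := cardsC J; rewrite card_ord hJ => /(canRL (addKn _)) ->; rewrite subKn // ltnW.
  have [g sgK gK] := injF_bij sginj.
  exists (g (~: J)); last by rewrite gK setCK.
  by apply/eqP; rewrite -sgsz gK hK.
- move=> I hI; have := sgsz I; rewrite hI eqxx => /eqP e.
  by have := (basis_minor ha hdim hI e (sgm I hI)).
Qed.
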